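(* Let $\mathbb{T}$ be a time scale, $\alpha\in(0,1]$, $m\ge 2$ an integer, and $t\in\mathbb{T}^k$. Let $f_1,\dots,f_m:\mathbb{T}\to\mathbb{R}$ each be continuous on $\mathbb{T}^k$ and nabla fractional differentiable of order $\alpha$ at $t$. Then $\prod_{i=1}^m f_i$ is nabla fractional differentiable of order $\alpha$ at $t$ and $$\nabla^{(\alpha)}\Big(\prod_{i=1}^m f_i\Big)(t)=\sum_{i=1}^m\Big(\prod_{1\le j\le i-1}f_j(\rho(t))\cdot\nabla^{(\alpha)}f_i(t)\cdot\prod_{i+1\le j\le m}f_j(t)\Big),$$ with empty products equal to $1$.
   Context: A time scale $\mathbb{T}$ is a nonempty closed subset of $\mathbb{R}$ with the relative topology. For $t\in\mathbb{T}$: $\rho(t)=\sup\{s\in\mathbb{T}:s<t\}$, $\sigma(t)=\inf\{s\in\mathbb{T}:s>t\}$. If $\mathbb{T}$ has a minimum $m_0$ with $\sigma(m_0)>m_0$ then $\mathbb{T}^k=\mathbb{T}\setminus\{m_0\}$, else $\mathbb{T}^k=\mathbb{T}$. $U_\delta(t)=(t-\delta,t+\delta)\cap\mathbb{T}$, $U^-_\delta(t)=(t-\delta,t)\cap\mathbb{T}$. Let $Q=\{1/q: q \text{ an odd positive integer}\}$; for $\alpha\in Q$, $x^\alpha$ is the real $q$-th root. Definition: $h:\mathbb{T}\to\mathbb{R}$ is nabla fractional differentiable of order $\alpha$ at $t\in\mathbb{T}^k$ if there is $L\in\mathbb{R}$ such that for every $\varepsilon>0$ there is $\delta>0$ with $|[h(\rho(t))-h(s)]-L[\rho(t)-s]^\alpha|\le\varepsilon|\rho(t)-s|^\alpha$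 for all $s\in U_\delta(t)$ if $\alpha\in Q$, resp. all $s\in U^-_\delta(t)$ if $\alpha\notin Q$; then $\nabla^{(\alpha)}h(t):=L$. *)

(* Defs.v *)
From HB Require Import structures.
From mathcomp Require Import all_boot all_order all_algebra.
From mathcomp Require Import all_classical all_reals all_analysis.
Set Implicit Arguments. Unset Strict Implicit. Unset Printing Implicit Defensive.
Import Order.TTheory GRing.Theory Num.Theory.
Import numFieldNormedType.Exports.
Local Open Scope classical_set_scope.
Local Open Scope ring_scope.

Definition time_scale {R : realType} (T : set R) : Prop :=
  closed T /\ T !=set0.

Definition rho {R : realType} (T : set R) (t : R) : R :=
  if pselect (exists s, T s /\ s < t) then sup [set s | T s /\ s < t] else t.

Definition sigma {R : realType} (T : set R) (t : R) : R :=
  if pselect (exists s, T s /\ t < s) then inf [set s | T s /\ t < s] else t.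

(* T^k : T minus its minimum m0 if that minimum is right-scattered *)
Definition Tk {R : realType} (T : set R) : set R :=
  [set t | T t /\
     ~ ((forall s, T s -> t <= s) /\ t < sigma T t)].

Definition inQ {R : realType} (a : R) : Prop :=
  exists q : nat, odd q /\ a = q%:R^-1.

(* x^a : for x >= 0 the usual power (0^a = 0 for a > 0);
   for x < 0 (only used when a = 1/q, q odd) the real q-th root -((-x)^a). *)
Definition fpow {R : realType} (a x : R) : R :=
  if 0 <= x then x `^ a else - ((- x) `^ a).

Definition nabla_frac_diff {R : realType} (T : set R) (a : R)
  (h : R -> R) (t L : R) : Prop :=
  Tk T t /\
  forall eps : R, 0 < eps -> exists delta : R, 0 < delta /\
    forall s : R, T s -> `|s - t| < delta -> (inQ a \/ s < t) ->
      `|(h (rho T t) - h s) - L * fpow a (rho T t - s)|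
        <= eps * `|rho T t - s| `^ a.

Definition cont_on_Tk {R : realType} (T : set R) (f : R -> R) : Prop :=
  forall x, Tk T x -> forall eps : R, 0 < eps -> exists delta : R, 0 < delta /\
    forall s, T s -> `|s - x| < delta -> `|f s - f x| < eps.

(* Main.v *)
Require Import Defs.
From mathcomp Require Import all_boot all_order all_algebra.
From mathcomp Require Import all_classical all_reals all_analysis.
From mathcomp Require Import ring lra.
Import Order.TTheory GRing.Theory Num.Theory.
Local Open Scope ring_scope.
Set Implicit Arguments.

Section S.
Variable R : realType.

Definition contT (T : set R) (g : R -> R) (t : R) :=
  forall eps : R, 0 < eps -> exists delta : R, 0 < delta /\
    forall s, T s -> `|s - t| < delta -> `|g s - g t| < eps.

Lemma norm_fpow (a x : R) : `|fpow a x| = `|x| `^ a.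
Proof.
rewrite /fpow; case: ifPn => x0.
  by rewrite ger0_norm ?powR_ge0 // ger0_norm.
move: x0; rewrite -ltNge => x0.
by rewrite normrN ger0_norm ?powR_ge0 // ltr0_norm.
Qed.

Lemma contT_mul T f g h t : (forall x, h x = f x * g x) ->
  contT T f t -> contT T g t -> contT T h t.
Proof.
move=> hE cf cg eps e0.
set A := `|f t| + 1; set C := `|g t| + 1.
have A0 : 0 < A by rewrite /A; have := normr_ge0 (f t); lra.
have C0 : 0 < C by rewrite /C; have := normr_ge0 (g t); lra.
set e1 := Num.min 1 (eps / (2 * C)).
set e2 := eps / (2 * A).
have e1p : 0 < e1 by rewrite lt_min ltr01 divr_gt0 // mulr_gt0.
have e2p : 0 < e2 by rewrite divr_gt0 // mulr_gt0.
have [d1 [d1p H1]] := cf e1 e1p.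
have [d2 [d2p H2]] := cg e2 e2p.
exists (Num.min d1 d2); split; first by rewrite lt_min d1p d2p.
move=> s Ts; rewrite lt_min => /andP [s1 s2].
have h1 := H1 s Ts s1; have h2 := H2 s Ts s2.
have h11 : `|f s - f t| < 1 by apply: (lt_le_trans h1); rewrite ge_min lexx.
have h12 : `|f s - f t| <= eps / (2 * C) by apply/ltW/(lt_le_trans h1); rewrite ge_min lexx orbT.
have fsA : `|f s| <= A.
  by have := ler_normD (f s - f t) (f t); rewrite subrK /A; lra.
rewrite !hE.
have -> : f s * g s - f t * g t = f s * (g s - g t) + g t * (f s - f t) by ring.
apply: (le_lt_trans (ler_normD _ _)); rewrite !normrM.
have t1 : `|f s| * `|g s - g t| < eps / 2.
  have -> : eps / 2 = A * e2 by rewrite /e2; field; lra.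
  apply: (le_lt_trans (y := A * `|g s - g t|)).
    by rewrite ler_wpM2r.
  by rewrite ltr_pM2l.
have t2 : `|g t| * `|f s - f t| <= eps / 2.
  have -> : eps / 2 = C * (eps / (2 * C)) by field; lra.
  apply: ler_pM => //; rewrite /C; lra.
lra.
Qed.


Lemma nfd_mul T a f g h t Lf Lg :
  (forall x, h x = f x * g x) -> contT T g t ->
  nabla_frac_diff T a f t Lf -> nabla_frac_diff T a g t Lg ->
  nabla_frac_diff T a h t (Lf * g t + f (rho T t) * Lg).
Proof.
move=> hE cg [Tt df] [_ dg]; split => // eps e0.
set r := rho T t.
set A := `|f r| + 1; set B := `|Lf| + 1; set C := `|g t| + 1.
have A0 : 0 < A by rewrite /A; have := normr_ge0 (f r); lra.
have B0 : 0 < B by rewrite /B; have := normr_ge0 Lf; lra.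
have C0 : 0 < C by rewrite /C; have := normr_ge0 (g t); lra.
set e1 := eps / (3 * A); set e2 := eps / (3 * C); set e3 := eps / (3 * B).
have e1p : 0 < e1 by rewrite divr_gt0 // mulr_gt0.
have e2p : 0 < e2 by rewrite divr_gt0 // mulr_gt0.
have e3p : 0 < e3 by rewrite divr_gt0 // mulr_gt0.
have [d1 [d1p H1]] := dg e1 e1p.
have [d2 [d2p H2]] := df e2 e2p.
have m3 : 0 < Num.min 1 e3 by rewrite lt_min ltr01 e3p.
have [d3 [d3p H3]] := cg _ m3.
exists (Num.min d1 (Num.min d2 d3)); split; first by rewrite !lt_min d1p d2p d3p.
move=> s Ts; rewrite !lt_min => /and3P [s1 s2 s3] q.
have h1 := H1 s Ts s1 q; have h2 := H2 s Ts s2 q; have h3 := H3 s Ts s3.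
have h31 : `|g s - g t| < 1 by apply: (lt_le_trans h3); rewrite ge_min lexx.
have h32 : `|g s - g t| <= e3 by apply/ltW/(lt_le_trans h3); rewrite ge_min lexx orbT.
rewrite -/r in h1 h2 *.
set N := `|r - s| `^ a in h1 h2 *.
set P := fpow a (r - s) in h1 h2 *.
have PN : `|P| = N by rewrite /P norm_fpow.
have N0 : 0 <= N by rewrite /N powR_ge0.
have gsC : `|g s| <= C.
  by have := ler_normD (g s - g t) (g t); rewrite subrK /C; lra.
rewrite !hE.
have -> : f r * g r - f s * g s - (Lf * g t + f r * Lg) * P =
  f r * (g r - g s - Lg * P) + g s * (f r - f s - Lf * P) + (g s - g t) * Lf * P
  by ring.
have t1 : `|f r * (g r - g s - Lg * P)| <= eps / 3 * N.
  have -> : eps / 3 * N = A * (e1 * N) by rewrite /e1; field; lra.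
  rewrite normrM; apply: ler_pM => //; rewrite /A; lra.
have t2 : `|g s * (f r - f s - Lf * P)| <= eps / 3 * N.
  have -> : eps / 3 * N = C * (e2 * N) by rewrite /e2; field; lra.
  by rewrite normrM; apply: ler_pM.
have t3 : `|(g s - g t) * Lf * P| <= eps / 3 * N.
  have -> : eps / 3 * N = (e3 * B) * N by rewrite /e3; field; lra.
  rewrite !normrM PN; apply: ler_wpM2r => //; apply: ler_pM => //.
  rewrite /B; lra.
apply: (le_trans (ler_normD _ _)).
have := ler_normD (f r * (g r - g s - Lg * P)) (g s * (f r - f s - Lf * P)).
lra.
Qed.


Lemma main_gen T a m t (f : nat -> R -> R) L : Tk T t ->
  (forall i, (i < m)%N -> contT T (f i) t) ->
  (forall i, (i < m)%N -> nabla_frac_diff T a (f i) t (L i)) ->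
  forall n k, (k + n = m)%N ->
  contT T (fun x => \prod_(k <= i < m) f i x) t /\
  nabla_frac_diff T a (fun x => \prod_(k <= i < m) f i x) t
    (\sum_(k <= i < m)
       ((\prod_(k <= j < i) f j (rho T t)) * L i *
        (\prod_(i.+1 <= j < m) f j t))).
Proof.
move=> Tt Hc Hd; elim=> [|n IH] k.
  rewrite addn0 => <-; rewrite big_geq //; split.
    by move=> eps e0; exists 1; split => // s _ _; rewrite !big_geq // subrr normr0.
  split => // eps e0; exists 1; split => // s _ _ _.
  rewrite !big_geq // subrr mul0r subrr normr0 mulr_ge0 ?powR_ge0 //; lra.
move=> km.
have kl : (k < m)%N by rewrite -km addnS ltnS leq_addr.
have km' : (k.+1 + n)%N = m by rewrite -km addSnnS.
have [IHc IHd] := IH k.+1 km'.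
have hE : forall x, \prod_(k <= i < m) f i x = f k x * \prod_(k.+1 <= i < m) f i x.
  by move=> x; rewrite big_ltn.
split; first exact: (contT_mul (fun x => \prod_(k <= i < m) f i x) hE (Hc k kl) IHc).
have := nfd_mul (fun x => \prod_(k <= i < m) f i x) hE IHc (Hd k kl) IHd.
congr nabla_frac_diff.
rewrite [in RHS]big_ltn // (big_geq (leqnn k)) mul1r; congr (_ + _).
rewrite big_distrr; apply: eq_big_nat => i /andP [ki _].
rewrite (big_ltn (m := k)) //.
by rewrite /= !mulrA.
Qed.

End S.

Theorem mainTheorem10 (R : realType) (T : set R) (a : R) (m : nat)
  (t : R) (f : nat -> R -> R) (L : nat -> R) :
  time_scale T -> 0 < a -> a <= 1 -> (2 <= m)%N -> Tk T t ->
  (forall i, (i < m)%N -> cont_on_Tk T (f i)) ->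
  (forall i, (i < m)%N -> nabla_frac_diff T a (f i) t (L i)) ->
  nabla_frac_diff T a (fun x => \prod_(0 <= i < m) f i x) t
    (\sum_(0 <= i < m)
       ((\prod_(0 <= j < i) f j (rho T t)) * L i *
        (\prod_(i.+1 <= j < m) f j t))).
Proof.
move=> _ _ _ _ Tt Hc Hd.
have Hc' : forall i, (i < m)%N -> contT R T (f i) t by move=> i im; exact: (Hc i im t Tt).
have [_ H] := @main_gen R T a m t f L Tt Hc' Hd m 0%N erefl.
exact H.
Qed.
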